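(* For every $n\ge1$, \[ \ell^\ast(\mathcal{B}_{(2,n)};z)=z(1+z)^{n-1}=\sum_{\substack{0<b<2^n\\ b \text{ odd}}} z^{\operatorname{supp}_2(b)}, \] where $\operatorname{supp}_2(b)$ is the number of $1$'s in the binary representation of $b$.
   Context: $\mathcal{B}_{(2,n)}:=\operatorname{conv}\bigl(e^{(1)},\ldots,e^{(n)},-\sum_{i=1}^n2^{i-1}e^{(i)}\bigr)\subset\mathbb{R}^n$, where $e^{(i)}$ are standard basis vectors. For a lattice simplex $\Delta=\operatorname{conv}(v^{(0)},\ldots,v^{(d)})\subset\mathbb{R}^n$, $\ell^\ast(\Delta;z):=\sum_{x\in\Pi^\circ_\Delta\cap\mathbb{Z}^{n+1}}z^{x_{n+1}}$, where $\Pi^\circ_\Delta:=\{\sum_{i=0}^d\lambda_i(v^{(i)},1):0<\lambda_i<1\}$. *)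

(* Defs.v *)
From HB Require Import structures.
From mathcomp Require Import all_boot all_order all_algebra.
From Stdlib Require Import ClassicalEpsilon.
Set Implicit Arguments. Unset Strict Implicit. Unset Printing Implicit Defensive.
Import Order.TTheory GRing.Theory Num.Theory.
Local Open Scope ring_scope.

(* A lattice d-simplex in R^n is given by its d+1 vertices
   V i : 'I_n -> int  (i : 'I_d.+1).  Points of R^(n+1) are functions
   'I_n.+1 -> _, the last coordinate being ord_max. *)

Definition lift_pt (n d : nat) (V : 'I_d.+1 -> 'I_n -> int) (i : 'I_d.+1)
  (j : 'I_n.+1) : int :=
  if unlift ord_max j is Some j' then V i j' else 1.

Definition in_open_pp (n d : nat) (V : 'I_d.+1 -> 'I_n -> int)
  (x : 'I_n.+1 -> int) : Prop :=
  exists lam : 'I_d.+1 -> rat,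
    (forall i, 0 < lam i < 1) /\
    (forall j, (x j)%:~R = \sum_(i < d.+1) lam i * (lift_pt V i j)%:~R).

(* A bound on the sup-norm of every point of Pi°_Delta:
   |x_j| <= sum_i |lift_pt V i j| <= bnd V. *)
Definition bnd (n d : nat) (V : 'I_d.+1 -> 'I_n -> int) : nat :=
  (d.+1 + \sum_(i < d.+1) \sum_(j < n) `|V i j|)%N.

Definition box_pt (n d : nat) (V : 'I_d.+1 -> 'I_n -> int)
  (c : {ffun 'I_n.+1 -> 'I_((bnd V).*2.+1)}) (j : 'I_n.+1) : int :=
  (c j)%:Z - (bnd V)%:Z.

Definition pdec (P : Prop) : bool :=
  if excluded_middle_informative P then true else false.

(* l^*(Delta; z) = sum over x in Pi°_Delta ∩ Z^(n+1) of z^(x_(n+1)).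
   Every such x lies in the box, and distinct c give distinct points,
   so this sum is exactly the sum over Pi°_Delta ∩ Z^(n+1). *)
Definition ell_star (n d : nat) (V : 'I_d.+1 -> 'I_n -> int) : {poly int} :=
  \sum_(c : {ffun 'I_n.+1 -> 'I_((bnd V).*2.+1)} | pdec (in_open_pp V (box_pt c)))
     'X^(absz (box_pt c ord_max)).

(* vertices of B_(2,n): e^(1),...,e^(n), - sum_i 2^(i-1) e^(i)  (0-indexed: 2^j) *)
Definition Bvert (n : nat) : 'I_n.+1 -> 'I_n -> int :=
  fun i j => if unlift ord_max i is Some i' then ((i' == j) : nat)%:Z
             else - (2 ^ j)%:Z.

(* number of 1's in the binary representation of b (bits 0..b suffice) *)
Definition supp2 (b : nat) : nat := \sum_(i < b.+1) odd (b %/ 2 ^ i).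
Arguments Bvert : clear implicits.

(* Main.v *)
Require Import Defs.
From HB Require Import structures.
From mathcomp Require Import all_boot all_order all_algebra.
Import GRing.Theory.
Local Open Scope ring_scope.

Lemma supp2_ext_aux b m k : (b < 2 ^ m)%N ->
  (\sum_(i < m + k) odd (b %/ 2 ^ i) = \sum_(i < m) odd (b %/ 2 ^ i))%N.
Proof.
move=> hb; elim: k => [|k IH]; first by rewrite addn0.
rewrite addnS big_ord_recr /= IH divn_small ?addn0 //.
by apply: (leq_trans hb); rewrite leq_exp2l // leq_addr.
Qed.

Lemma supp2_ext b m : (b < 2 ^ m)%N -> supp2 b = (\sum_(i < m) odd (b %/ 2 ^ i))%N.
Proof.
move=> hb; rewrite /supp2.
have hb' : (b < 2 ^ b.+1)%N by apply: (ltn_trans (ltn_expl b (isT : (1 < 2)%N))); rewrite ltn_exp2l.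
rewrite -(supp2_ext_aux _ _ m hb') -(supp2_ext_aux _ _ b.+1 hb).
by rewrite addnC.
Qed.

Lemma supp2_0 : supp2 0 = 0%N.
Proof. by rewrite /supp2 big_ord_recl big_ord0. Qed.

Lemma supp2_step (r : bool) a : supp2 (r + a.*2) = (r + supp2 a)%N.
Proof.
have ha : (a < 2 ^ a.+1)%N by apply: (ltn_trans (ltn_expl a (isT : (1 < 2)%N))); rewrite ltn_exp2l.
have hb : (r + a.*2 < 2 ^ a.+2)%N.
  rewrite expnS mul2n; apply: (@leq_trans (a.+1).*2); first by case: r; rewrite doubleS.
  by rewrite leq_double.
rewrite (supp2_ext _ _ hb) (supp2_ext _ _ ha) big_ord_recl /=.
rewrite expn0 divn1 oddD odd_double addbF; congr addn.
  by case: (r) => /=.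
apply: eq_bigr => i _; rewrite /bump /= add1n expnS divnMA -muln2 addnC divnMDl //.
have -> : (r %/ 2 = 0)%N by case: (r).
by rewrite addn0.
Qed.

Lemma sum_double (R : nmodType) (N : nat) (G : nat -> R) :
  \sum_(0 <= b < (2 * N)%N) G b = \sum_(0 <= a < N) (G a.*2 + G (1 + a.*2)%N).
Proof.
elim: N => [|N IH]; first by rewrite muln0 !big_geq.
rewrite mulnS !big_nat_recr //=.
by rewrite IH -addrA mul2n add1n.
Qed.

Lemma supp2_even a : supp2 a.*2 = supp2 a.
Proof. by have := supp2_step false a; rewrite add0n. Qed.

Lemma supp2_odd a : supp2 (1 + a.*2) = (supp2 a).+1.
Proof. by have := supp2_step true a. Qed.

Lemma sum_all m : \sum_(0 <= b < (2 ^ m)%N) ('X^(supp2 b) : {poly int}) = (1 + 'X) ^+ m.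
Proof.
elim: m => [|m IH]; first by rewrite expn0 big_nat1 supp2_0 expr0.
rewrite expnS sum_double exprS -IH big_distrr /=.
apply: eq_bigr => a _; rewrite supp2_even supp2_odd exprS.
by rewrite mulrDl mul1r.
Qed.

Lemma sum_odd m : \sum_(0 <= b < (2 ^ m.+1)%N | (0 < b)%N && odd b) ('X^(supp2 b) : {poly int})
   = 'X * (1 + 'X) ^+ m.
Proof.
rewrite big_mkcond /= expnS sum_double -sum_all big_distrr /=.
apply: eq_bigr => a _; rewrite odd_double andbF add0r.
by rewrite add1n /= -add1n supp2_odd exprS.
Qed.

From mathcomp Require Import ring lra zify.
From Stdlib Require Import ClassicalEpsilon.
Import Order.TTheory Num.Theory.

Lemma sum_split (R : nmodType) n (F : 'I_n.+1 -> R) :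
  \sum_(i < n.+1) F i = \sum_(i < n) F (lift ord_max i) + F ord_max.
Proof.
rewrite big_ord_recr /=; congr (_ + _); apply: eq_bigr => i _.
by congr F; apply: val_inj; rewrite /= /bump leqNgt ltn_ord add0n.
Qed.

Lemma lpt_ll n (i j : 'I_n) :
  lift_pt (Bvert n) (lift ord_max i) (lift ord_max j) = ((i == j) : nat)%:Z.
Proof. by rewrite /lift_pt /Bvert !liftK. Qed.
Lemma lpt_ml n (j : 'I_n) : lift_pt (Bvert n) ord_max (lift ord_max j) = - (2 ^ j)%N%:Z.
Proof. by rewrite /lift_pt /Bvert liftK unlift_none. Qed.
Lemma lpt_m n i : lift_pt (Bvert n) i ord_max = 1.
Proof. by rewrite /lift_pt unlift_none. Qed.

Lemma coordj n (lam : 'I_n.+1 -> rat) (j : 'I_n) :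
  \sum_(i < n.+1) lam i * (lift_pt (Bvert n) i (lift ord_max j))%:~R
  = lam (lift ord_max j) - lam ord_max * (2 ^ j)%N%:R.
Proof.
rewrite sum_split lpt_ml (bigD1 j) //= big1 => [|i hij].
  by rewrite lpt_ll eqxx /= mulr1 addr0 mulrNz mulrN.
by rewrite /lift_pt /Bvert !liftK (negbTE hij) mulr0.
Qed.

Lemma coordn n (lam : 'I_n.+1 -> rat) :
  \sum_(i < n.+1) lam i * (lift_pt (Bvert n) i ord_max)%:~R = \sum_(i < n.+1) lam i.
Proof. by apply: eq_bigr => i _; rewrite lpt_m mulr1. Qed.

Lemma sum_pow2 n : ((\sum_(i < n) 2 ^ i).+1 = 2 ^ n)%N.
Proof.
elim: n => [|n IH]; first by rewrite big_ord0.
by rewrite big_ord_recr /= -addSn IH expnS mul2n addnn.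
Qed.

Lemma leg n k : (k < 2 ^ n)%N -> (supp2 k + \sum_(i < n) k %/ 2 ^ i.+1 = k)%N.
Proof.
elim: n k => [|n IH] k hk.
  by move: hk; rewrite expn0 ltnS leqn0 => /eqP ->; rewrite supp2_0 big_ord0.
have hh : (k./2 < 2 ^ n)%N by rewrite -divn2 ltn_divLR // -expnSr.
have e := odd_double_half k.
rewrite -{1}(odd_double_half k) supp2_step big_ord_recl /= expn1 divn2.
have -> : (\sum_(i < n) k %/ 2 ^ (bump 0 i).+1 = \sum_(i < n) k./2 %/ 2 ^ i.+1)%N.
  by apply: eq_bigr => i _; rewrite /bump /= add1n expnS divnMA divn2.
have := IH _ hh; rewrite -addnn in e; lia.
Qed.

Lemma leg2 n k : (k < 2 ^ n)%N -> (supp2 k + \sum_(j < n) k %/ 2 ^ (n - j) = k)%N.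
Proof.
move=> hk; rewrite -[RHS](leg _ _ hk); congr addn.
rewrite (reindex_inj rev_ord_inj) /=; apply: eq_bigr => j _.
by rewrite subKn.
Qed.

Definition pk (n k : nat) (j : 'I_n.+1) : int :=
  if unlift ord_max j is Some j' then - (k %/ 2 ^ (n - j'))%N%:Z else (supp2 k)%:Z.
Definition lamk (n k : nat) (i : 'I_n.+1) : rat :=
  if unlift ord_max i is Some i' then (2 ^ i' * (k %% 2 ^ (n - i')))%N%:R / (2 ^ n)%N%:R
  else k%:R / (2 ^ n)%N%:R.

Lemma lamk_l n k (j : 'I_n) :
  lamk n k (lift ord_max j) = (2 ^ j * (k %% 2 ^ (n - j)))%N%:R / (2 ^ n)%N%:R.
Proof. by rewrite /lamk liftK. Qed.
Lemma lamk_m n k : lamk n k ord_max = k%:R / (2 ^ n)%N%:R.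
Proof. by rewrite /lamk unlift_none. Qed.
Lemma pk_l n k (j : 'I_n) : pk n k (lift ord_max j) = - (k %/ 2 ^ (n - j))%N%:Z.
Proof. by rewrite /pk liftK. Qed.
Lemma pk_m n k : pk n k ord_max = (supp2 k)%:Z.
Proof. by rewrite /pk unlift_none. Qed.

Lemma pow_split n (j : 'I_n) : (2 ^ n = 2 ^ j * 2 ^ (n - j))%N.
Proof. by rewrite -expnD subnKC // ltnW. Qed.

Lemma lamk_range n k i : odd k -> (k < 2 ^ n)%N -> 0 < lamk n k i < 1.
Proof.
move=> ho hk; have hN : 0 < (2 ^ n)%N%:R :> rat by rewrite ltr0n expn_gt0.
case: (unliftP ord_max i) => [j ->|->].
  rewrite lamk_l; apply/andP; split.
    rewrite ltr_pdivlMr // mul0r ltr0n muln_gt0 expn_gt0 /= lt0n.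
    apply/negP => /eqP h0; move: ho; apply/negP; rewrite -dvdn2.
    apply: (@dvdn_trans (2 ^ (n - j))); last by rewrite /dvdn h0.
    by apply: dvdn_exp => //; rewrite subn_gt0.
  rewrite ltr_pdivrMr // mul1r ltr_nat (pow_split _ j) ltn_pmul2l ?expn_gt0 //.
  by rewrite ltn_pmod // expn_gt0.
rewrite lamk_m; apply/andP; split.
  by rewrite ltr_pdivlMr // mul0r ltr0n odd_gt0.
by rewrite ltr_pdivrMr // mul1r ltr_nat.
Qed.

Lemma pk_coord_j n k (j : 'I_n) :
  (pk n k (lift ord_max j))%:~R = lamk n k (lift ord_max j) - lamk n k ord_max * (2 ^ j)%N%:R.
Proof.
rewrite pk_l lamk_l lamk_m.
have e := divn_eq k (2 ^ (n - j)); have eN := pow_split _ j.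
have hD : (2 ^ (n - j))%N%:R != 0 :> rat by rewrite pnatr_eq0 -lt0n expn_gt0.
have hP : (2 ^ j)%N%:R != 0 :> rat by rewrite pnatr_eq0 -lt0n expn_gt0.
move: e; set q := (k %/ _)%N; set r := (k %% _)%N => e.
rewrite eN [in RHS]e !natrM natrD natrM mulrNz.
field.
by rewrite hD hP.
Qed.

Lemma pk_coord_m n k : (k < 2 ^ n)%N ->
  (pk n k ord_max)%:~R = \sum_(i < n.+1) lamk n k i.
Proof.
move=> hk.
have h (j : 'I_n) : lamk n k (lift ord_max j) =
    (pk n k (lift ord_max j))%:~R + lamk n k ord_max * (2 ^ j)%N%:R.
  by rewrite pk_coord_j subrK.
rewrite sum_split (eq_bigr _ (fun j _ => h j)) big_split /= -mulr_sumr.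
have hN : (2 ^ n)%N%:R != 0 :> rat by rewrite pnatr_eq0 -lt0n expn_gt0.
have h1 : (supp2 k)%:R + \sum_(j < n) (k %/ 2 ^ (n - j))%N%:R = k%:R :> rat.
  by rewrite -natr_sum -natrD leg2.
have h2 : \sum_(j < n) (2 ^ j)%N%:R + 1 = (2 ^ n)%N%:R :> rat.
  by rewrite -(sum_pow2 n) mulrS addrC natr_sum.
have h3 : \sum_(j < n) ((pk n k (lift ord_max j))%:~R : rat)
        = - \sum_(j < n) (k %/ 2 ^ (n - j))%N%:R.
  by rewrite -sumrN; apply: eq_bigr => j _; rewrite pk_l mulrNz.
rewrite h3 pk_m lamk_m -addrA -{2}(mulr1 (k%:R / _)) -mulrDr h2 divfK //.
rewrite -h1 /=; lra.
Qed.

Lemma pk_open n k : odd k -> (k < 2 ^ n)%N -> in_open_pp (Bvert n) (pk n k).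
Proof.
move=> ho hk; exists (lamk n k); split; first by move=> i; apply: lamk_range.
move=> j; case: (unliftP ord_max j) => [j' ->|->].
  by rewrite coordj pk_coord_j.
by rewrite coordn pk_coord_m.
Qed.

Lemma frac_lem (y : int) (r D : nat) (l : rat) : (r < D)%N ->
  l = y%:~R + r%:R / D%:R -> 0 < l < 1 -> y = 0 /\ (0 < r)%N.
Proof.
move=> hr -> /andP[h0 h1].
have hD : 0 < D%:R :> rat by rewrite ltr0n (leq_ltn_trans (leq0n r) hr).
have f0 : 0 <= r%:R / D%:R :> rat by rewrite divr_ge0 // ler0n.
have f1 : r%:R / D%:R < 1 :> rat by rewrite ltr_pdivrMr // mul1r ltr_nat.
have : y = 0 \/ 1 <= y \/ y <= -1 by lia.
case=> [hy|[hy|hy]].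
- split => //; move: h0; rewrite hy add0r ltr_pdivlMr // mul0r ltr0n //.
- have hy' : (1%:~R : rat) <= y%:~R by rewrite ler_int.
  exfalso; move: hy'; rewrite /=; lra.
- have hy' : (y%:~R : rat) <= (-1)%:~R by rewrite ler_int.
  exfalso; move: hy'; rewrite /=; lra.
Qed.

Lemma open_pk n x : (0 < n)%N -> in_open_pp (Bvert n) x ->
  exists k, [/\ odd k, (k < 2 ^ n)%N & forall j, x j = pk n k j].
Proof.
move=> hn [lam [hlam hx]].
set mu := lam ord_max.
have hxj (j : 'I_n) : (x (lift ord_max j))%:~R = lam (lift ord_max j) - mu * (2 ^ j)%N%:R.
  by rewrite hx coordj.
have hxn : (x ord_max)%:~R = \sum_(j < n) lam (lift ord_max j) + mu.
  by rewrite hx coordn sum_split.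
have hNpos : 0 < (2 ^ n)%N%:R :> rat by rewrite ltr0n expn_gt0.
have hN : (2 ^ n)%N%:R != 0 :> rat by rewrite pnatr_eq0 -lt0n expn_gt0.
set K := x ord_max - \sum_(j < n) x (lift ord_max j).
have hK : (K%:~R : rat) = mu * (2 ^ n)%N%:R.
  rewrite /K rmorphB /= rmorph_sum /= hxn (eq_bigr _ (fun j _ => hxj j)) sumrB.
  rewrite -(sum_pow2 n) mulrS natr_sum -mulr_sumr.
  set S1 := \sum_(i < n) lam _; set S2 := \sum_(i < n) _%:R.
  ring.
have hmu := hlam ord_max; rewrite -/mu in hmu; case/andP: hmu => hmu0 hmu1.
have hK0 : 0 < K.
  by rewrite -(ltr_int rat) hK /= mulr_gt0.
have hKN : K < (2 ^ n)%N%:Z.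
  rewrite -(ltr_int rat) hK /=; nra.
set k := absz K.
have eK : K = k%:Z by rewrite /k gez0_abs // ltW.
have hk : (k < 2 ^ n)%N by rewrite -ltz_nat -eK.
have hmuk : mu = k%:R / (2 ^ n)%N%:R.
  by rewrite -[k%:R]/((k%:Z)%:~R : rat) -eK hK mulfK.
have hj (j : 'I_n) : x (lift ord_max j) = - (k %/ 2 ^ (n - j))%N%:Z /\ (0 < k %% 2 ^ (n - j))%N.
  have e := divn_eq k (2 ^ (n - j)); have eN := pow_split _ j.
  have hD : (2 ^ (n - j))%N%:R != 0 :> rat by rewrite pnatr_eq0 -lt0n expn_gt0.
  have hP : (2 ^ j)%N%:R != 0 :> rat by rewrite pnatr_eq0 -lt0n expn_gt0.
  move: e; set q := (k %/ _)%N; set r := (k %% _)%N => e.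
  have hr : (r < 2 ^ (n - j))%N by rewrite ltn_pmod // expn_gt0.
  have hl : lam (lift ord_max j) = (x (lift ord_max j) + q%:Z)%:~R + r%:R / (2 ^ (n - j))%N%:R.
    have -> : lam (lift ord_max j) = (x (lift ord_max j))%:~R + mu * (2 ^ j)%N%:R.
      by rewrite hxj subrK.
    rewrite hmuk eN e intrD !natrM natrD natrM /=.
    field; by rewrite hD hP.
  have [hy hr0] := frac_lem _ _ _ _ hr hl (hlam _).
  split => //; apply/eqP; rewrite -subr_eq0 opprK; exact/eqP.
exists k; split => //.
- have hn1 : (n.-1 < n)%N by rewrite ltn_predL.
  have [_ h] := hj (Ordinal hn1).
  move: h => /=; have -> : (n - n.-1 = 1)%N by lia.
  by rewrite expn1 modn2 lt0b.
- move=> j; case: (unliftP ord_max j) => [j' ->|->].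
    by rewrite pk_l (hj j').1.
  apply: (@intr_inj rat); rewrite pk_coord_m // hxn sum_split.
  congr (_ + _); last by rewrite lamk_m.
  apply: eq_bigr => i _.
  have e1 := hxj i; have e2 := pk_coord_j n k i.
  rewrite (hj i).1 -pk_l e2 lamk_m -hmuk in e1.
  by have := congr1 (fun t => t + mu * (2 ^ i)%N%:R) e1; rewrite !subrK.
Qed.

Lemma pk_bound n k j : (k < 2 ^ n)%N -> (absz (pk n k j) <= k)%N.
Proof.
move=> hk; case: (unliftP ord_max j) => [j' ->|->].
  by rewrite pk_l abszN absz_nat leq_div.
by rewrite pk_m absz_nat -{2}(leg2 _ _ hk) leq_addr.
Qed.

Lemma bnd_ge n : (2 ^ n <= bnd (Bvert n))%N.
Proof.
rewrite /bnd -(sum_pow2 n) (big_ord_recr n) /=.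
have -> : (\sum_(j < n) `|Bvert n ord_max j| = \sum_(j < n) 2 ^ j)%N.
  by apply: eq_bigr => j _; rewrite /Bvert unlift_none abszN absz_nat.
by rewrite addnC addnS ltnS (leq_trans (leq_addl _ _) (leq_addr _ _)).
Qed.

Definition phi n (k : nat) : {ffun 'I_n.+1 -> 'I_((bnd (Bvert n)).*2.+1)} :=
  [ffun j => inord (absz (pk n k j + (bnd (Bvert n))%:Z))].

Lemma box_phi n k j : (k < 2 ^ n)%N -> box_pt (phi n k) j = pk n k j.
Proof.
move=> hk.
have hb : (absz (pk n k j) <= bnd (Bvert n))%N.
  exact: leq_trans (pk_bound _ _ j hk) (leq_trans (ltnW hk) (bnd_ge n)).
rewrite /box_pt ffunE.
move: hb; set B := bnd _; set p := pk n k j => hb.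
have [h1 h2] : (0 <= p + B%:Z) /\ (absz (p + B%:Z)%R < B.*2.+1)%N by lia.
rewrite inordK //; lia.
Qed.

Lemma pdecP (P : Prop) : reflect P (pdec P).
Proof. by rewrite /pdec; case: excluded_middle_informative => h; constructor. Qed.

Lemma box_inj n (c1 c2 : {ffun 'I_n.+1 -> 'I_((bnd (Bvert n)).*2.+1)}) :
  (forall j, box_pt c1 j = box_pt c2 j) -> c1 = c2.
Proof.
move=> h; apply/ffunP => j; apply: val_inj; move: (h j); rewrite /box_pt.
by move=> /eqP; rewrite (inj_eq (addIr _)) eqz_nat => /eqP.
Qed.

Lemma ell_star_sum n : (0 < n)%N ->
  ell_star (Bvert n) = \sum_(0 <= b < (2 ^ n)%N | (0 < b)%N && odd b) ('X^(supp2 b) : {poly int}).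
Proof.
move=> hn.
set A := [set k : 'I_(2 ^ n) | odd k].
rewrite /ell_star.
transitivity (\sum_(c in [set phi n k | k : 'I_(2 ^ n) in A]) ('X^(absz (box_pt c ord_max)) : {poly int})).
  apply: eq_bigl => c; apply/pdecP/imsetP.
    move/(open_pk _ _ hn) => [k [ho hk hx]].
    exists (Ordinal hk); first by rewrite inE.
    by apply: box_inj => j; rewrite box_phi // hx.
  case=> k; rewrite inE => ho ->.
  have [lam [hl hx]] := pk_open _ _ ho (ltn_ord k).
  exists lam; split => // j; by rewrite box_phi // hx.
rewrite big_imset /=.
  rewrite big_mkord; apply: eq_big => k.
    by rewrite inE; apply/idP/andP => [h|[]//]; split => //; exact: odd_gt0.
  by rewrite inE => _; rewrite box_phi // pk_m absz_nat.
move=> k1 k2 _ _ e; apply: val_inj => /=.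
have h1 := leg2 _ _ (ltn_ord k1); have h2 := leg2 _ _ (ltn_ord k2).
have ej j : pk n k1 j = pk n k2 j by rewrite -!box_phi // e.
have em := ej ord_max; rewrite !pk_m in em.
have el : (\sum_(j < n) k1 %/ 2 ^ (n - j) = \sum_(j < n) k2 %/ 2 ^ (n - j))%N.
  apply: eq_bigr => j _; have := ej (lift ord_max j); rewrite !pk_l; lia.
lia.
Qed.

Theorem mainTheorem10 (n : nat) (hn : (1 <= n)%N) :
  ell_star (Bvert n) = 'X * (1 + 'X) ^+ (n - 1)%N /\
  'X * (1 + 'X) ^+ (n - 1)%N =
    \sum_(0 <= b < (2 ^ n)%N | (0 < b)%N && odd b) ('X^(supp2 b) : {poly int}).
Proof.
have e : 'X * (1 + 'X) ^+ (n - 1)%N =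
    \sum_(0 <= b < (2 ^ n)%N | (0 < b)%N && odd b) ('X^(supp2 b) : {poly int}).
  by case: n hn => // m _; rewrite subSS subn0 sum_odd.
by split => //; rewrite ell_star_sum.
Qed.
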